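(* Let $W$ be a finite-dimensional real vector space and let $N$ be a $5$-linear form on $W$, written in components as $N_{ijk\ell m}$ (thought of as $R_{ijk\ell,m}$), having the algebraic symmetries of the covariant derivative of a Riemann curvature tensor: (i) $N_{ijk\ell m}=-N_{jik\ell m}$; (ii) $N_{ijk\ell m}=N_{k\ell ij m}$; (iii) $N_{ijk\ell m}+N_{jki\ell m}+N_{kij\ell m}=0$ (first Bianchi identity in the first three indices); (iv) $N_{ijk\ell m}+N_{ij\ell m k}+N_{ijmk\ell}=0$ (Bianchi identity in the last three indices). Suppose moreover that for all indices $i,j,k,\ell,m$ $$N_{ijk\ell m}+N_{kjm\ell i}+N_{mji\ell k}+N_{i\ell kjm}+N_{k\ell mji}+N_{m\ell ijk}=0,$$ equivalently, for all $X,Y,U,V,Z\in W$, $N(X,V,Y,Z,U)+N(Y,V,U,Z,X)+N(U,V,X,Z,Y)+N(X,Z,Y,V,U)+N(Y,Z,U,V,X)+N(U,Z,X,V,Y)=0$. Then $N=0$. *)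

(* Defs.v *)
From HB Require Import structures.
From mathcomp Require Import all_boot all_order all_algebra.
From mathcomp Require Import reals.
Set Implicit Arguments. Unset Strict Implicit. Unset Printing Implicit Defensive.
Import Order.TTheory GRing.Theory Num.Theory.
Local Open Scope ring_scope.

Definition multilinear5 (R : realType) (W : vectType R)
  (N : W -> W -> W -> W -> W -> R) : Prop :=
  [/\ (forall (a : R) x x' y z u v,
         N (a *: x + x') y z u v = a * N x y z u v + N x' y z u v),
      (forall (a : R) x y y' z u v,
         N x (a *: y + y') z u v = a * N x y z u v + N x y' z u v),
      (forall (a : R) x y z z' u v,
         N x y (a *: z + z') u v = a * N x y z u v + N x y z' u v),
      (forall (a : R) x y z u u' v,
         N x y z (a *: u + u') v = a * N x y z u v + N x y z u' v) &
      (forall (a : R) x y z u v v',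
         N x y z u (a *: v + v') = a * N x y z u v + N x y z u v')].

(* Main.v *)
Require Import Defs.
From HB Require Import structures.
From mathcomp Require Import all_boot all_order all_algebra.
From mathcomp Require Import reals.
From mathcomp Require Import ring.
Import Order.TTheory GRing.Theory Num.Theory.
Local Open Scope ring_scope.

Theorem mainTheorem3 (R : realType) (W : vectType R)
  (N : W -> W -> W -> W -> W -> R)
  (Hlin : multilinear5 N)
  (H1 : forall i j k l m : W, N i j k l m = - N j i k l m)
  (H2 : forall i j k l m : W, N i j k l m = N k l i j m)
  (H3 : forall i j k l m : W, N i j k l m + N j k i l m + N k i j l m = 0)
  (H4 : forall i j k l m : W, N i j k l m + N i j l m k + N i j m k l = 0)
  (H5 : forall X Y U V Z : W,
     N X V Y Z U + N Y V U Z X + N U V X Z Y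
   + N X Z Y V U + N Y Z U V X + N U Z X V Y = 0) :
  forall X Y Z U V : W, N X Y Z U V = 0.
Proof.
  move=> X Y Z U V.
  have e0 : N X V Y Z U - N Y Z X V U = 0 by rewrite (H2 X V Y Z U) subrr.
  have e1 : N X U Y Z V - (- N U X Y Z V) = 0 by rewrite (H1 X U Y Z V) subrr.
  have e2 : N X Z Y U V - N Y U X Z V = 0 by rewrite (H2 X Z Y U V) subrr.
  have e3 : (N X Y U Z V + N Y U X Z V + N U X Y Z V) - 0 = 0 by rewrite (H3 X Y U Z V) subrr.
  have e4 : (N X Y Z V U + N Y Z X V U + N Z X Y V U) - 0 = 0 by rewrite (H3 X Y Z V U) subrr.
  have e5 : N X Z Y V U - (- N Z X Y V U) = 0 by rewrite (H1 X Z Y V U) subrr.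
  have e6 : N X U Y Z V - N Y Z X U V = 0 by rewrite (H2 X U Y Z V) subrr.
  have e7 : N Y U Z V X - N Z V Y U X = 0 by rewrite (H2 Y U Z V X) subrr.
  have e8 : N X Y Z U V - N Z U X Y V = 0 by rewrite (H2 X Y Z U V) subrr.
  have e9 : N X U Z V Y - N Z V X U Y = 0 by rewrite (H2 X U Z V Y) subrr.
  have e10 : (N X Z Y V U + N X Z V U Y + N X Z U Y V) - 0 = 0 by rewrite (H4 X Z Y V U) subrr.
  have e11 : N X U Y V Z - N Y V X U Z = 0 by rewrite (H2 X U Y V Z) subrr.
  have e12 : (N X U Y Z V + N U Y X Z V + N Y X U Z V) - 0 = 0 by rewrite (H3 X U Y Z V) subrr.
  have e13 : N X Z U Y V - N U Y X Z V = 0 by rewrite (H2 X Z U Y V) subrr.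
  have e14 : N X Y U Z V - (- N Y X U Z V) = 0 by rewrite (H1 X Y U Z V) subrr.
  have e15 : N Y Z U X V - N U X Y Z V = 0 by rewrite (H2 Y Z U X V) subrr.
  have e16 : N X Y Z U V - (- N Y X Z U V) = 0 by rewrite (H1 X Y Z U V) subrr.
  have e17 : N Y U Z V X - (- N U Y Z V X) = 0 by rewrite (H1 Y U Z V X) subrr.
  have e18 : N X V Z U Y - (- N V X Z U Y) = 0 by rewrite (H1 X V Z U Y) subrr.
  have e19 : (N X Z V U Y + N Z V X U Y + N V X Z U Y) - 0 = 0 by rewrite (H3 X Z V U Y) subrr.
  have e20 : (N Y Z X V U + N Y Z V U X + N Y Z U X V) - 0 = 0 by rewrite (H4 Y Z X V U) subrr.
  have e21 : (N Y Z U V X + N Z U Y V X + N U Y Z V X) - 0 = 0 by rewrite (H3 Y Z U V X) subrr.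
  have e22 : (N X U Z V Y + N Z U Y V X + N Y U X V Z + N X V Z U Y + N Z V Y U X + N Y V X U Z) - 0 = 0 by rewrite (H5 X Z Y U V) subrr.
  have e23 : N Y Z V X U - N V X Y Z U = 0 by rewrite (H2 Y Z V X U) subrr.
  have e24 : (N Y Z X U V + N Y Z U V X + N Y Z V X U) - 0 = 0 by rewrite (H4 Y Z X U V) subrr.
  have e25 : N Y U V X Z - N V X Y U Z = 0 by rewrite (H2 Y U V X Z) subrr.
  have e26 : (N Y U X Z V + N Y U Z V X + N Y U V X Z) - 0 = 0 by rewrite (H4 Y U X Z V) subrr.
  have e27 : N X Z Y V U - N Y V X Z U = 0 by rewrite (H2 X Z Y V U) subrr.
  have e28 : (N X Y V Z U + N Y V X Z U + N V X Y Z U) - 0 = 0 by rewrite (H3 X Y V Z U) subrr.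
  have e29 : N X V Y U Z - (- N V X Y U Z) = 0 by rewrite (H1 X V Y U Z) subrr.
  have e30 : (N X Y Z U V + N Y Z X U V + N Z X Y U V) - 0 = 0 by rewrite (H3 X Y Z U V) subrr.
  have e31 : N X Z Y U V - (- N Z X Y U V) = 0 by rewrite (H1 X Z Y U V) subrr.
  have e32 : (N X Y U V Z + N Y U X V Z + N U X Y V Z) - 0 = 0 by rewrite (H3 X Y U V Z) subrr.
  have e33 : N X U Y V Z - (- N U X Y V Z) = 0 by rewrite (H1 X U Y V Z) subrr.
  have e34 : (N X Y Z U V + N X Y U V Z + N X Y V Z U) - 0 = 0 by rewrite (H4 X Y Z U V) subrr.
  have e35 : (N Y U Z V X + N U Z Y V X + N Z Y U V X) - 0 = 0 by rewrite (H3 Y U Z V X) subrr.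
  have e36 : N X V Z Y U - (- N V X Z Y U) = 0 by rewrite (H1 X V Z Y U) subrr.
  have e37 : (N X V Y U Z + N X V U Z Y + N X V Z Y U) - 0 = 0 by rewrite (H4 X V Y U Z) subrr.
  have e38 : (N X Z U V Y + N U Z Y V X + N Y Z X V U + N X V U Z Y + N U V Y Z X + N Y V X Z U) - 0 = 0 by rewrite (H5 X U Y Z V) subrr.
  have e39 : (N X Z Y U V + N X Z U V Y + N X Z V Y U) - 0 = 0 by rewrite (H4 X Z Y U V) subrr.
  have e40 : N X Z V Y U - N V Y X Z U = 0 by rewrite (H2 X Z V Y U) subrr.
  have e41 : (N X V Y Z U + N V Y X Z U + N Y X V Z U) - 0 = 0 by rewrite (H3 X V Y Z U) subrr.
  have e42 : N X Y V Z U - (- N Y X V Z U) = 0 by rewrite (H1 X Y V Z U) subrr.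
  have e43 : (N X Z V Y U + N Z V X Y U + N V X Z Y U) - 0 = 0 by rewrite (H3 X Z V Y U) subrr.
  have e44 : N X Y Z V U - N Z V X Y U = 0 by rewrite (H2 X Y Z V U) subrr.
  have e45 : N Y Z U V X - N U V Y Z X = 0 by rewrite (H2 Y Z U V X) subrr.
  have e46 : N Y Z U V X - (- N Z Y U V X) = 0 by rewrite (H1 Y Z U V X) subrr.
  have e47 : N Z X U V Y - N U V Z X Y = 0 by rewrite (H2 Z X U V Y) subrr.
  have e48 : N X Z U V Y - (- N Z X U V Y) = 0 by rewrite (H1 X Z U V Y) subrr.
  have e49 : N X V Y Z U - (- N V X Y Z U) = 0 by rewrite (H1 X V Y Z U) subrr.
  have e50 : (N X Y Z V U + N X Y V U Z + N X Y U Z V) - 0 = 0 by rewrite (H4 X Y Z V U) subrr.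
  have e51 : N X U V Z Y - N V Z X U Y = 0 by rewrite (H2 X U V Z Y) subrr.
  have e52 : (N X U Y V Z + N X U V Z Y + N X U Z Y V) - 0 = 0 by rewrite (H4 X U Y V Z) subrr.
  have e53 : N X U Z Y V - (- N U X Z Y V) = 0 by rewrite (H1 X U Z Y V) subrr.
  have e54 : (N X Z U Y V + N Z U X Y V + N U X Z Y V) - 0 = 0 by rewrite (H3 X Z U Y V) subrr.
  have e55 : N Y U Z X V - (- N U Y Z X V) = 0 by rewrite (H1 Y U Z X V) subrr.
  have e56 : (N Y U X V Z + N Y U V Z X + N Y U Z X V) - 0 = 0 by rewrite (H4 Y U X V Z) subrr.
  have e57 : (N X Z Y U V + N Y Z V U X + N V Z X U Y + N X U Y Z V + N Y U V Z X + N V U X Z Y) - 0 = 0 by rewrite (H5 X Y V Z U) subrr.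
  have e58 : N X Z V U Y - N V U X Z Y = 0 by rewrite (H2 X Z V U Y) subrr.
  have e59 : (N Y Z U X V + N Z U Y X V + N U Y Z X V) - 0 = 0 by rewrite (H3 Y Z U X V) subrr.
  have e60 : N Y X Z U V - N Z U Y X V = 0 by rewrite (H2 Y X Z U V) subrr.
  have e61 : (N Y V X Z U + N Y V Z U X + N Y V U X Z) - 0 = 0 by rewrite (H4 Y V X Z U) subrr.
  have e62 : (N X U Y V Z + N Y U Z V X + N Z U X V Y + N X V Y U Z + N Y V Z U X + N Z V X U Y) - 0 = 0 by rewrite (H5 X Y Z U V) subrr.
  have e63 : (N X Z U V Y + N Z U X V Y + N U X Z V Y) - 0 = 0 by rewrite (H3 X Z U V Y) subrr.
  have e64 : (N Y X U V Z + N U X Z V Y + N Z X Y V U + N Y V U X Z + N U V Z X Y + N Z V Y X U) - 0 = 0 by rewrite (H5 Y U Z X V) subrr.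
  have e65 : N X Y U V Z - (- N Y X U V Z) = 0 by rewrite (H1 X Y U V Z) subrr.
  have e66 : N Y X Z V U - N Z V Y X U = 0 by rewrite (H2 Y X Z V U) subrr.
  have e67 : N X Y Z V U - (- N Y X Z V U) = 0 by rewrite (H1 X Y Z V U) subrr.
  have e68 : N Z X V U Y - N V U Z X Y = 0 by rewrite (H2 Z X V U Y) subrr.
  have e69 : N X Z V U Y - (- N Z X V U Y) = 0 by rewrite (H1 X Z V U Y) subrr.
  have e70 : (N Y X V U Z + N V X Z U Y + N Z X Y U V + N Y U V X Z + N V U Z X Y + N Z U Y X V) - 0 = 0 by rewrite (H5 Y V Z X U) subrr.
  have e71 : N X Y V U Z - (- N Y X V U Z) = 0 by rewrite (H1 X Y V U Z) subrr.
  have key : 12%:R * N X Y Z U V = (2%:R) * (N X V Y Z U - N Y Z X V U)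
    + (-11%:R) * (N X U Y Z V - (- N U X Y Z V))
    + (10%:R) * (N X Z Y U V - N Y U X Z V)
    + (7%:R) * ((N X Y U Z V + N Y U X Z V + N U X Y Z V) - 0)
    + (1%:R) * ((N X Y Z V U + N Y Z X V U + N Z X Y V U) - 0)
    + (1%:R) * (N X Z Y V U - (- N Z X Y V U))
    + (10%:R) * (N X U Y Z V - N Y Z X U V)
    + (-1%:R) * (N Y U Z V X - N Z V Y U X)
    + (2%:R) * (N X Y Z U V - N Z U X Y V)
    + (1%:R) * (N X U Z V Y - N Z V X U Y)
    + (-5%:R) * ((N X Z Y V U + N X Z V U Y + N X Z U Y V) - 0)
    + (-1%:R) * (N X U Y V Z - N Y V X U Z)
    + (3%:R) * ((N X U Y Z V + N U Y X Z V + N Y X U Z V) - 0)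
    + (3%:R) * (N X Z U Y V - N U Y X Z V)
    + (-3%:R) * (N X Y U Z V - (- N Y X U Z V))
    + (-4%:R) * (N Y Z U X V - N U X Y Z V)
    + (2%:R) * (N X Y Z U V - (- N Y X Z U V))
    + (-1%:R) * (N Y U Z V X - (- N U Y Z V X))
    + (1%:R) * (N X V Z U Y - (- N V X Z U Y))
    + (3%:R) * ((N X Z V U Y + N Z V X U Y + N V X Z U Y) - 0)
    + (2%:R) * ((N Y Z X V U + N Y Z V U X + N Y Z U X V) - 0)
    + (1%:R) * ((N Y Z U V X + N Z U Y V X + N U Y Z V X) - 0)
    + (-1%:R) * ((N X U Z V Y + N Z U Y V X + N Y U X V Z + N X V Z U Y + N Z V Y U X + N Y V X U Z) - 0)
    + (-1%:R) * (N Y Z V X U - N V X Y Z U)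
    + (1%:R) * ((N Y Z X U V + N Y Z U V X + N Y Z V X U) - 0)
    + (1%:R) * (N Y U V X Z - N V X Y U Z)
    + (3%:R) * ((N Y U X Z V + N Y U Z V X + N Y U V X Z) - 0)
    + (4%:R) * (N X Z Y V U - N Y V X Z U)
    + (3%:R) * ((N X Y V Z U + N Y V X Z U + N V X Y Z U) - 0)
    + (1%:R) * (N X V Y U Z - (- N V X Y U Z))
    + (9%:R) * ((N X Y Z U V + N Y Z X U V + N Z X Y U V) - 0)
    + (-5%:R) * (N X Z Y U V - (- N Z X Y U V))
    + (-1%:R) * ((N X Y U V Z + N Y U X V Z + N U X Y V Z) - 0)
    + (1%:R) * (N X U Y V Z - (- N U X Y V Z))
    + (-1%:R) * ((N X Y Z U V + N X Y U V Z + N X Y V Z U) - 0)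
    + (1%:R) * ((N Y U Z V X + N U Z Y V X + N Z Y U V X) - 0)
    + (-1%:R) * (N X V Z Y U - (- N V X Z Y U))
    + (1%:R) * ((N X V Y U Z + N X V U Z Y + N X V Z Y U) - 0)
    + (-1%:R) * ((N X Z U V Y + N U Z Y V X + N Y Z X V U + N X V U Z Y + N U V Y Z X + N Y V X Z U) - 0)
    + (-3%:R) * ((N X Z Y U V + N X Z U V Y + N X Z V Y U) - 0)
    + (2%:R) * (N X Z V Y U - N V Y X Z U)
    + (2%:R) * ((N X V Y Z U + N V Y X Z U + N Y X V Z U) - 0)
    + (-2%:R) * (N X Y V Z U - (- N Y X V Z U))
    + (1%:R) * ((N X Z V Y U + N Z V X Y U + N V X Z Y U) - 0)
    + (1%:R) * (N X Y Z V U - N Z V X Y U)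
    + (-1%:R) * (N Y Z U V X - N U V Y Z X)
    + (-1%:R) * (N Y Z U V X - (- N Z Y U V X))
    + (-2%:R) * (N Z X U V Y - N U V Z X Y)
    + (2%:R) * (N X Z U V Y - (- N Z X U V Y))
    + (-4%:R) * (N X V Y Z U - (- N V X Y Z U))
    + (-4%:R) * ((N X Y Z V U + N X Y V U Z + N X Y U Z V) - 0)
    + (-2%:R) * (N X U V Z Y - N V Z X U Y)
    + (2%:R) * ((N X U Y V Z + N X U V Z Y + N X U Z Y V) - 0)
    + (-2%:R) * (N X U Z Y V - (- N U X Z Y V))
    + (2%:R) * ((N X Z U Y V + N Z U X Y V + N U X Z Y V) - 0)
    + (-2%:R) * (N Y U Z X V - (- N U Y Z X V))
    + (2%:R) * ((N Y U X V Z + N Y U V Z X + N Y U Z X V) - 0)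
    + (-2%:R) * ((N X Z Y U V + N Y Z V U X + N V Z X U Y + N X U Y Z V + N Y U V Z X + N V U X Z Y) - 0)
    + (-2%:R) * (N X Z V U Y - N V U X Z Y)
    + (2%:R) * ((N Y Z U X V + N Z U Y X V + N U Y Z X V) - 0)
    + (-2%:R) * (N Y X Z U V - N Z U Y X V)
    + (2%:R) * ((N Y V X Z U + N Y V Z U X + N Y V U X Z) - 0)
    + (-2%:R) * ((N X U Y V Z + N Y U Z V X + N Z U X V Y + N X V Y U Z + N Y V Z U X + N Z V X U Y) - 0)
    + (2%:R) * ((N X Z U V Y + N Z U X V Y + N U X Z V Y) - 0)
    + (-2%:R) * ((N Y X U V Z + N U X Z V Y + N Z X Y V U + N Y V U X Z + N U V Z X Y + N Z V Y X U) - 0)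
    + (2%:R) * (N X Y U V Z - (- N Y X U V Z))
    + (-2%:R) * (N Y X Z V U - N Z V Y X U)
    + (2%:R) * (N X Y Z V U - (- N Y X Z V U))
    + (-4%:R) * (N Z X V U Y - N V U Z X Y)
    + (4%:R) * (N X Z V U Y - (- N Z X V U Y))
    + (-4%:R) * ((N Y X V U Z + N V X Z U Y + N Z X Y U V + N Y U V X Z + N V U Z X Y + N Z U Y X V) - 0)
    + (4%:R) * (N X Y V U Z - (- N Y X V U Z)) by ring.
  rewrite e0 e1 e2 e3 e4 e5 e6 e7 e8 e9 e10 e11 e12 e13 e14 e15 e16 e17 e18 e19 e20 e21 e22 e23 e24 e25 e26 e27 e28 e29 e30 e31 e32 e33 e34 e35 e36 e37 e38 e39 e40 e41 e42 e43 e44 e45 e46 e47 e48 e49 e50 e51 e52 e53 e54 e55 e56 e57 e58 e59 e60 e61 e62 e63 e64 e65 e66 e67 e68 e69 e70 e71 in key.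
  rewrite !mulr0 !addr0 in key.
  by move/eqP: key; rewrite mulf_eq0 pnatr_eq0 /= => /eqP.
Qed.
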